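(* Let $F$ be a set of fields. The following are equivalent: (1) every simple matroid that is representable over all fields in $F$ has a unique minimal tropical basis; (2) the binary field $\mathbb F_2$ is in $F$.
   Context: A matroid $M=([n],\mathscr C)$ is given by its circuit set $\mathscr C$. It is simple if every circuit has cardinality greater than $2$. It is representable over a field $K$ if it is isomorphic to the matroid whose circuits are the minimal linearly dependent subsets of a finite set of vectors in a $K$-vector space. Let ${\bf TP}^{n-1}$ be the tropical projective space over $(\mathbb R\cup\{-\infty\},\max,+)$. For a circuit $C$, $V(C)$ is the set of $x\in{\bf TP}^{n-1}$ such that $\max\{x_i : i\in C\}$ is attained at least twice. For $B\subseteq\mathscr C$, set $V(B)=\bigcap_{C\in B}V(C)$. A subset $B\subseteq\mathscr C$ is a tropical basis if $V(B)=V(\mathscr C)$. It is a minimal tropical basis if no proper subset of it is a tropical basis. *)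

(* Defs.v *)
From Stdlib Require Import Rdefinitions.
From HB Require Import structures.
From mathcomp Require Import all_boot all_order all_algebra.
Set Implicit Arguments. Unset Strict Implicit. Unset Printing Implicit Defensive.
Import GRing.Theory.

Definition is_matroid_circuits (n : nat) (circ : {set {set 'I_n}}) : Prop :=
  [/\ set0 \notin circ,
      (forall C1 C2, C1 \in circ -> C2 \in circ -> C1 \subset C2 -> C1 = C2) &
      (forall C1 C2 e, C1 \in circ -> C2 \in circ -> C1 <> C2 ->
         e \in C1 :&: C2 ->
         exists2 C3, C3 \in circ & C3 \subset (C1 :|: C2) :\ e)].

Definition simple_matroid (n : nat) (circ : {set {set 'I_n}}) : Prop :=
  forall C, C \in circ -> 2 < #|C|.

Definition vdependent (K : fieldType) (d n : nat) (v : 'I_n -> 'rV[K]_d)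
  (S : {set 'I_n}) : bool :=
  ~~ free [seq v i | i in S].

(* Representable over K: circuits are (up to relabelling of [n], absorbed in the
   choice of the indexing) the minimal linearly dependent subsets of a finite
   family of vectors in a finite-dimensional K-vector space. *)
Definition representable (K : fieldType) (n : nat) (circ : {set {set 'I_n}}) : Prop :=
  exists (d : nat) (v : 'I_n -> 'rV[K]_d),
    circ = [set S | minset (vdependent v) S].

(* Tropical semiring values: None = -oo, Some r = r. *)
Definition tle (a b : option R) : Prop :=
  match a, b with
  | None, _ => True
  | Some _, None => False
  | Some x, Some y => Rle x y
  end.

(* Points of TP^{n-1} are represented by vectors in (R u {-oo})^n not all -oo;
   all sets below are invariant under tropical scaling, so we work with
   representatives. *)
Definition TPpoint (n : nat) (x : 'I_n -> option R) : Prop :=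
  exists i, x i <> None.

Definition inV (n : nat) (C : {set 'I_n}) (x : 'I_n -> option R) : Prop :=
  exists i j, [/\ i \in C, j \in C, i <> j, x i = x j &
                  forall k, k \in C -> tle (x k) (x i)].

Definition inVset (n : nat) (B : {set {set 'I_n}}) (x : 'I_n -> option R) : Prop :=
  forall C, C \in B -> inV C x.

Definition tropical_basis (n : nat) (circ B : {set {set 'I_n}}) : Prop :=
  B \subset circ /\
  (forall x, TPpoint x -> (inVset B x <-> inVset circ x)).

Definition minimal_tropical_basis (n : nat) (circ B : {set {set 'I_n}}) : Prop :=
  tropical_basis circ B /\
  (forall B' : {set {set 'I_n}}, B' \proper B -> ~ tropical_basis circ B').

Definition iso_F2 (K : fieldType) : Prop :=
  exists f : {rmorphism 'F_2 -> K}, bijective f.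

(* Main.v *)
From Stdlib Require Import Classical RIneq.
Require Import Defs.
From mathcomp Require Import all_boot all_order all_algebra.
From HB Require Import structures.
From mathcomp Require Import zify ring.
Set Implicit Arguments. Unset Strict Implicit. Unset Printing Implicit Defensive.
Import GRing.Theory.
Local Open Scope ring_scope.

Lemma conv_sum (K : fieldType) d n (v : 'I_n -> 'rV[K]_d) (S : {set 'I_n}) (j0 : 'I_n)
  (c : 'I_n -> K) :
  \sum_(i < size [seq v i | i in S]) c (nth j0 (enum S) i) *: [seq v i | i in S]`_i
  = \sum_(x in S) c x *: v x.
Proof.
rewrite -[RHS]big_enum (big_nth j0) -[LHS](big_mkord (fun _ => true) (fun i => c (nth j0 (enum S) i) *: [seq v i | i in S]`_i)) size_map.
apply: eq_big_nat => i /andP[_ hi]; by rewrite (nth_map j0).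
Qed.

Lemma freeS (K : fieldType) d n (v : 'I_n -> 'rV[K]_d) (S : {set 'I_n}) :
  free [seq v i | i in S] <->
  (forall c : 'I_n -> K, \sum_(x in S) c x *: v x = 0 -> forall x, x \in S -> c x = 0).
Proof.
case: (set_0Vmem S) => [->|[j0 _]].
  rewrite (_ : [seq v i | i in set0] = [::]); last by apply/nilP; rewrite /nilp size_image cards0.
  split => [_ c _ x|_]; [by rewrite inE | exact: nil_free].
have us := enum_uniq S.
split.
- move=> /(@freeP _ _ _ (in_tuple [seq v i | i in S])) fr c hc x xS.
  have := fr (fun i => c (nth j0 (enum S) i)) (etrans (conv_sum v S j0 c) hc).
  have hx : (index x (enum S) < size [seq v i | i in S])%N.
    by rewrite size_map index_mem mem_enum.
  move=> /(_ (Ordinal hx)) /=; by rewrite nth_index // mem_enum.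
- move=> h; apply/(@freeP _ _ _ (in_tuple [seq v i | i in S])) => k hk i.
  pose k' (m : nat) := \sum_(i' < size [seq v i | i in S] | val i' == m) k i'.
  have kk : forall i', k i' = k' i'.
    move=> i'; rewrite /k' (big_pred1 i') // => j /=; by rewrite val_eqE.
  have hs : forall i' : 'I_(size [seq v i | i in S]), (i' < size (enum S))%N.
    by move=> i'; rewrite -(size_map v) ltn_ord.
  have := h (fun x => k' (index x (enum S))).
  rewrite -(conv_sum v S j0).
  have -> : \sum_(i0 < size [seq v i | i in S]) k' (index (nth j0 (enum S) i0) (enum S)) *:
     [seq v i | i in S]`_i0 = \sum_(i0 < size [seq v i | i in S]) k i0 *: [seq v i | i in S]`_i0.
    apply: eq_bigr => i' _; by rewrite index_uniq // -kk.
  move=> /(_ hk (nth j0 (enum S) i)).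
  rewrite index_uniq // -kk; apply.
  by rewrite -mem_enum mem_nth.
Qed.
Lemma F2_cases (x : 'F_2) : x = 0 \/ x = 1.
Proof.
case: x => [[|[|m]] hm]; [left|right|by []]; exact: val_inj.
Qed.

Lemma iso_F2_01 (K : fieldType) : iso_F2 K -> forall k : K, k = 0 \/ k = 1.
Proof.
move=> [f [g fg gf]] k; rewrite -[k]gf; case: (F2_cases (g k)) => ->;
 [left; exact: rmorph0 | right; exact: rmorph1].
Qed.

Definition f2map (K : fieldType) (x : 'F_2) : K := (val x)%:R.

Lemma two0 (K : fieldType) (h : forall k : K, k = 0 \/ k = 1) : (1 + 1 : K) = 0.
Proof.
case: (h (1 + 1)) => // e; exfalso.
have : (1 : K) = 0 by apply: (addrI 1); rewrite addr0.
by move/eqP; rewrite oner_eq0.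
Qed.

Lemma not_iso_F2 (K : fieldType) : ~ iso_F2 K -> exists a : K, a != 0 /\ a != 1.
Proof.
move=> hn; apply: NNPP => hne; apply: hn.
have h : forall k : K, k = 0 \/ k = 1.
  move=> k; apply: NNPP => hk; apply: hne; exists k; split; apply/eqP => e; apply: hk; tauto.
have h2 := two0 h.
have fa : nmod_morphism (@f2map K).
  split; first by rewrite /f2map.
  move=> x y; case: (F2_cases x) => ->; case: (F2_cases y) => ->; rewrite /f2map /= ?addr0 ?add0r //.
have fm : monoid_morphism (@f2map K).
  split; first by rewrite /f2map.
  move=> x y; case: (F2_cases x) => ->; case: (F2_cases y) => ->; rewrite /f2map /= ?mulr0 ?mul0r ?mulr1 //.
pose phiaM := GRing.isNmodMorphism.Build _ _ (@f2map K) fa.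
pose phimM := GRing.isMonoidMorphism.Build _ _ (@f2map K) fm.
pose phiRM : {rmorphism 'F_2 -> K} := HB.pack (@f2map K) phiaM phimM.
exists phiRM; exists (fun k : K => if k == 0 then 0 else 1).
- move=> x /=; case: (F2_cases x) => -> ; rewrite /f2map /= ?eqxx //.
  by rewrite oner_eq0.
- move=> k /=; case: (h k) => ->; rewrite ?eqxx /f2map //.
  by rewrite oner_eq0.
Qed.
Definition oneint n (C S : {set 'I_n}) : bool := #|C :&: S| == 1%N.
Definition goodb n (B : {set {set 'I_n}}) (S : {set 'I_n}) : bool :=
  [forall C in B, ~~ oneint C S].
Definition xS n (S : {set 'I_n}) : 'I_n -> option R :=
  fun k => if k \in S then Some R0 else None.

Lemma inV_xS n (C S : {set 'I_n}) : (1 < #|C|)%N -> (inV C (xS S) <-> ~~ oneint C S).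
Proof.
move=> hC; split.
- move=> [i [j [iC jC ij eij hmax]]]; apply/negP => /cards1P [s hs].
  have sCS : s \in C :&: S by rewrite hs set11.
  move: (sCS); rewrite inE => /andP [sC sS].
  have hi : i \in S.
    apply/negPn/negP => iS; have := hmax s sC; by rewrite /xS (negbTE iS) sS.
  have hj : j \in S by move: eij; rewrite /xS hi; case: (j \in S).
  have : i \in C :&: S by rewrite inE iC hi.
  have : j \in C :&: S by rewrite inE jC hj.
  rewrite hs !inE => /eqP ej /eqP ei; apply: ij; by rewrite ei ej.
- move=> h1; case: (boolP (C :&: S == set0)) => [/eqP h0 | hne].
  + have nS : forall k, k \in C -> k \notin S.
      move=> k kC; apply/negP => kS.
      have : k \in C :&: S by rewrite inE kC kS.
      by rewrite h0 inE.
    move/card_gt1P: hC => [i [j [iC jC ij]]]; exists i, j; split => //.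
    * exact/eqP.
    * by rewrite /xS (negbTE (nS _ iC)) (negbTE (nS _ jC)).
    * by move=> k kC; rewrite /xS (negbTE (nS _ kC)) (negbTE (nS _ iC)).
  + have : (1 < #|C :&: S|)%N.
      move: h1 hne; rewrite /oneint -cards_eq0.
      by case: #|C :&: S| => [|[|m]].
    move/card_gt1P => [i [j [iS jS ij]]]; move: iS jS; rewrite !inE.
    move=> /andP [iC iS] /andP [jC jS].
    exists i, j; split => //.
    * exact/eqP.
    * by rewrite /xS iS jS.
    * move=> k kC; rewrite /xS iS; case: (k \in S) => //=; exact: Rle_refl.
Qed.

Lemma tle_total a b : tle a b \/ tle b a.
Proof.
case: a => [y|]; case: b => [z|] /=; auto.
case: (Rle_or_lt y z); auto => h; right; exact: Rlt_le.
Qed.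

Lemma tle_trans a b c : tle a b -> tle b c -> tle a c.
Proof.
case: a => [y|]; case: b => [z|]; case: c => [w|] //=; exact: Rle_trans.
Qed.

Lemma tle_antisym a b : tle a b -> tle b a -> a = b.
Proof.
case: a => [y|]; case: b => [z|] //= h1 h2; by rewrite (Rle_antisym _ _ h1 h2).
Qed.

Lemma tle_refl a : tle a a.
Proof. case: a => [y|] //=; exact: Rle_refl. Qed.

Definition tleb (a b : option R) : bool :=
  match a, b with
  | None, _ => true
  | Some _, None => false
  | Some y, Some z => if Rle_dec y z then true else false
  end.

Lemma tlebP a b : reflect (tle a b) (tleb a b).
Proof.
case: a => [y|]; case: b => [z|] /=; try by constructor.
case: (Rle_dec y z) => h; by constructor.
Qed.

Lemma exists_max n (x : 'I_n -> option R) (s : seq 'I_n) :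
  s != [::] -> exists2 i, i \in s & forall k, k \in s -> tle (x k) (x i).
Proof.
elim: s => [//|a s IH] _.
case: (altP (s =P [::])) => [-> | sne].
  exists a; first exact: mem_head.
  move=> k; rewrite inE => /eqP ->; exact: tle_refl.
have [i ins hi] := IH sne.
case: (tle_total (x a) (x i)) => h.
- exists i; first by rewrite inE ins orbT.
  move=> k; rewrite inE => /orP [/eqP -> // | ks]; exact: hi.
- exists a; first exact: mem_head.
  move=> k; rewrite inE => /orP [/eqP -> | ks]; first exact: tle_refl.
  exact: tle_trans (hi k ks) h.
Qed.

Lemma level n (C : {set 'I_n}) x : (1 < #|C|)%N -> ~ inV C x ->
  exists S : {set 'I_n}, [/\ S != set0, oneint C S & forall D, oneint D S -> ~ inV D x].
Proof.
move=> hC hnot.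
have [i iC imax] : exists2 i, i \in C & forall k, k \in C -> tle (x k) (x i).
  have ne : enum C != [::].
    apply/eqP => e; move: hC; by rewrite cardE e.
  have [i ie hi] := exists_max x ne.
  exists i; first by rewrite -mem_enum.
  move=> k kC; apply: hi; by rewrite mem_enum.
have umax : forall k, k \in C -> x k = x i -> k = i.
  move=> k kC e; apply: NNPP => ki; apply: hnot; exists i, k; split.
  - exact: iC.
  - exact: kC.
  - by move=> e'; apply: ki.
  - by rewrite e.
  - exact: imax.
have xin : x i <> None.
  move=> xn; move/card_gt1P: hC => [a [b [aC bC ab]]].
  have ha : x a = x i by rewrite xn; move: (imax a aC); rewrite xn; case: (x a).
  have hb : x b = x i by rewrite xn; move: (imax b bC); rewrite xn; case: (x b).
  by move: ab; rewrite (umax _ aC ha) (umax _ bC hb) eqxx.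
exists [set k | tleb (x i) (x k)]; split.
- apply/set0Pn; exists i; rewrite inE; apply/tlebP; exact: tle_refl.
- apply/cards1P; exists i; apply/setP => k; rewrite !inE.
  apply/andP/eqP => [[kC /tlebP h] | ->].
  + apply: umax => //; exact: tle_antisym (imax k kC) h.
  + split => //; apply/tlebP; exact: tle_refl.
- move=> D /cards1P [s hs] [i' [j' [i'D j'D ij eij hm]]].
  have : s \in D :&: [set k | tleb (x i) (x k)] by rewrite hs set11.
  rewrite !inE => /andP [sD /tlebP hs'].
  have hi' : tle (x i) (x i') := tle_trans hs' (hm s sD).
  have : i' \in D :&: [set k | tleb (x i) (x k)] by rewrite !inE i'D; apply/tlebP.
  have : j' \in D :&: [set k | tleb (x i) (x k)] by rewrite !inE j'D -eij; apply/tlebP.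
  rewrite hs !inE => /eqP ej /eqP ei; apply: ij; by rewrite ei ej.
Qed.

Lemma tb_iff n (circ B : {set {set 'I_n}}) : (forall C, C \in circ -> 1 < #|C|)%N ->
  (tropical_basis circ B <->
   B \subset circ /\ forall S, S != set0 -> goodb B S -> goodb circ S).
Proof.
move=> hc; split.
- move=> [sub h]; split => // S Sne gB.
  have tp : TPpoint (xS S).
    have [s sS] := set0Pn _ Sne; exists s; by rewrite /xS sS.
  have : inVset B (xS S).
    move=> C CB; apply/inV_xS; first exact: hc (subsetP sub C CB).
    exact: (forall_inP gB C CB).
  move/(proj1 (h _ tp)) => hcc.
  apply/forall_inP => C Cc; apply/inV_xS; [exact: hc | exact: hcc].
- move=> [sub h]; split => // x tp; split.
  + move=> hB C Cc; apply: NNPP => nv.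
    have [S [Sne oC hD]] := level (hc C Cc) nv.
    have ng : ~~ goodb circ S.
      by apply/negP => /forall_inP /(_ C Cc); rewrite oC.
    have : ~~ goodb B S by apply: contra ng; exact: h.
    move/forall_inPn => [D DB]; rewrite negbK => oD.
    exact: hD D oD (hB D DB).
  + move=> hcc C CB; apply: hcc; exact: (subsetP sub).
Qed.

Definition essb n (circ : {set {set 'I_n}}) (C : {set 'I_n}) : bool :=
  [exists S, (S != set0) && oneint C S && [forall D in circ, oneint D S ==> (D == C)]].

Lemma GU n (circ : {set {set 'I_n}}) : (forall C, C \in circ -> 1 < #|C|)%N ->
  (forall S, S != set0 -> ~~ goodb circ S ->
     exists2 C, C \in circ & oneint C S && essb circ C) ->
  exists! B, minimal_tropical_basis circ B.
Proof.
move=> hc hess.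
set E := [set C in circ | essb circ C].
have Esub : E \subset circ by apply/subsetP => C; rewrite inE => /andP [].
have notb : forall B' : {set {set 'I_n}}, B' \subset circ -> forall C, C \in E -> C \notin B' ->
    ~ tropical_basis circ B'.
  move=> B' sub C CE CnB /(tb_iff _ hc) [_ h].
  move: CE; rewrite inE => /andP [Cc /existsP [S /andP [/andP [Sne oC] hall]]].
  have gB' : goodb B' S.
    apply/forall_inP => D DB; apply/negP => oD.
    have := forall_inP hall D (subsetP sub D DB); rewrite oD /= => /eqP e.
    by move: CnB; rewrite -e DB.
  have := forall_inP (h S Sne gB') C Cc; by rewrite oC.
have Eb : tropical_basis circ E.
  apply/(tb_iff _ hc); split => // S Sne gE.
  apply/negPn/negP => ng.
  have [C Cc /andP [oC eC]] := hess S Sne ng.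
  have CE : C \in E by rewrite inE Cc eC.
  have := forall_inP gE C CE; by rewrite oC.
exists E; split.
- split => // B' pr; have [sub [C CE CnB]] := properP pr.
  apply: (notb B' _ C CE CnB); exact: subset_trans sub Esub.
- move=> B [tB minB]; have subB := tB.1.
  have EB : E \subset B.
    apply/subsetP => C CE; case: (boolP (C \in B)) => // CnB.
    exfalso; exact: notb subB C CE CnB tB.
  apply/eqP; rewrite eqEproper EB /=; apply/negP => pr; exact: minB E pr Eb.
Qed.
Local Open Scope ring_scope.

Lemma depF2 (K : fieldType) d n (v : 'I_n -> 'rV[K]_d) (h01 : forall k : K, k = 0 \/ k = 1)
  (S : {set 'I_n}) :
  vdependent v S <-> exists A : {set 'I_n}, [/\ A \subset S, A != set0 & \sum_(x in A) v x = 0].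
Proof.
split.
- move/negP => nfr; apply: NNPP => hne; apply: nfr; apply/(freeS v S) => c hc x xS.
  apply: NNPP => cx; apply: hne; exists [set y in S | c y == 1]; split.
  + by apply/subsetP => y; rewrite inE => /andP [].
  + apply/set0Pn; exists x; rewrite inE xS /=; case: (h01 (c x)) => // ->; by rewrite eqxx.
  + rewrite -[RHS]hc (eq_bigl (fun y => (y \in S) && (c y == 1))); last by move=> y; rewrite inE.
    rewrite big_mkcondr; apply: eq_bigr => y _.
    case: (h01 (c y)) => ->; rewrite ?eqxx ?scale1r ?scale0r //.
    by rewrite eq_sym oner_eq0.
- move=> [A [sub Ane sA]]; rewrite /vdependent; apply/negP => fr.
  have := proj1 (freeS v S) fr (fun x => (x \in A)%:R).
  have [a aA] := set0Pn _ Ane.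
  have -> : \sum_(x in S) (x \in A)%:R *: v x = \sum_(x in A) v x.
    rewrite (big_setID A) /= (setIidPr sub).
    rewrite [X in _ + X]big1 ?addr0; last first.
      move=> y; rewrite inE => /andP [/negbTE -> _]; by rewrite scale0r.
    apply: eq_bigr => y ->; by rewrite scale1r.
  move=> /(_ sA a (subsetP sub a aA)); rewrite aA => /eqP; by rewrite oner_eq0.
Qed.

Lemma circ_sum (K : fieldType) d n (v : 'I_n -> 'rV[K]_d) (h01 : forall k : K, k = 0 \/ k = 1)
  (C : {set 'I_n}) : minset (vdependent v) C -> \sum_(x in C) v x = 0.
Proof.
move/minsetP => [dep minC]; have [A [sub Ane sA]] := proj1 (depF2 v h01 C) dep.
have AC : A = C.
  apply: minC sub; apply/(depF2 v h01 A); exists A; split => //.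
by rewrite -AC.
Qed.

Lemma cycle_circ (K : fieldType) d n (v : 'I_n -> 'rV[K]_d) (h01 : forall k : K, k = 0 \/ k = 1)
  (Z : {set 'I_n}) (e : 'I_n) : \sum_(x in Z) v x = 0 -> e \in Z ->
  exists C', [/\ minset (vdependent v) C', e \in C' & C' \subset Z].
Proof.
move=> sZ eZ.
pose P := fun A : {set 'I_n} => [&& A \subset Z, e \in A & \sum_(x in A) v x == 0].
have PZ : P Z by rewrite /P subxx eZ sZ eqxx.
case: (arg_minnP (fun A : {set 'I_n} => #|A|) PZ) => Z' /and3P [Z'Z eZ' /eqP sZ'] minZ'.
exists Z'; split => //.
apply/minsetP; split.
- apply/(depF2 v h01); exists Z'; split => //; by apply/set0Pn; exists e.
- move=> W /(depF2 v h01) [A [AW Ane sA]] WZ'.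
  have AZ' : A \subset Z' := subset_trans AW WZ'.
  case: (boolP (e \in A)) => eA.
  + have := minZ' A; rewrite /P (subset_trans AZ' Z'Z) eA sA eqxx => /(_ isT) hc.
    have : A == Z' by rewrite eqEcard AZ' hc.
    move/eqP => AZ; apply/eqP; rewrite eqEsubset WZ' -AZ AW //.
  + exfalso.
    have sD : \sum_(x in Z' :\: A) v x = 0.
      move: sZ'; rewrite (big_setID A) /= (setIidPr AZ') sA add0r //.
    have := minZ' (Z' :\: A); rewrite /P sD eqxx inE eZ' eA /=.
    rewrite (subset_trans _ Z'Z) ?subsetDl // => /(_ isT).
    have [a aA] := set0Pn _ Ane.
    have pr : Z' :\: A \proper Z'.
      rewrite properE subsetDl /=; apply/negP => /subsetP /(_ a (subsetP AZ' a aA)).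
      by rewrite inE aA.
    have := proper_card pr; move=> h1 h2; have := leq_ltn_trans h2 h1; by rewrite ltnn.
Qed.

Lemma symdiff_sum (K : fieldType) d n (v : 'I_n -> 'rV[K]_d) (h01 : forall k : K, k = 0 \/ k = 1)
  (C D : {set 'I_n}) :
  \sum_(x in (C :\: D) :|: (D :\: C)) v x = \sum_(x in C) v x + \sum_(x in D) v x.
Proof.
have xx : forall w : 'rV[K]_d, w + w = 0.
  by move=> w; rewrite -{1 2}(scale1r w) -scalerDl two0 // scale0r.
have E1 : ((C :\: D) :|: (D :\: C)) :&: C = C :\: D.
  apply/setP => y; rewrite !inE; by case: (y \in C); case: (y \in D).
have E2 : ((C :\: D) :|: (D :\: C)) :\: C = D :\: C.
  apply/setP => y; rewrite !inE; by case: (y \in C); case: (y \in D).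
rewrite (big_setID C) /= E1 E2 [in RHS](big_setID D) [X in _ = _ + X](big_setID C) /= (setIC D C).
by rewrite addrACA xx add0r.
Qed.

Local Close Scope ring_scope.

Lemma binary_hess (K : fieldType) d n (v : 'I_n -> 'rV[K]_d) (circ : {set {set 'I_n}}) :
  iso_F2 K -> circ = [set S | minset (vdependent v) S] -> simple_matroid circ ->
  forall S, S != set0 -> ~~ goodb circ S ->
  exists2 C, C \in circ & oneint C S && essb circ C.
Proof.
move=> iso hcirc simp S Sne ng.
have h01 := iso_F2_01 iso.
have circP : forall D, (D \in circ) = minset (vdependent v) D.
  by move=> D; rewrite hcirc inE.
have [C0 C0c oC0] : exists2 C0, C0 \in circ & oneint C0 S.
  move/forall_inPn: ng => [C0 C0c]; rewrite negbK => ?; by exists C0.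
pose P := fun C : {set 'I_n} => (C \in circ) && oneint C S.
have PC0 : P C0 by rewrite /P C0c oC0.
case: (arg_minnP (fun C : {set 'I_n} => #|C|) PC0) => C /andP [Cc oC] minC.
exists C => //; rewrite oC /=.
have [e he] := cards1P oC.
have : e \in C :&: S by rewrite he set11.
rewrite inE => /andP [eC eS].
have CS : forall y, y \in C -> y \in S -> y = e.
  move=> y yC yS; have : y \in C :&: S by rewrite inE yC yS.
  by rewrite he inE => /eqP.
apply/existsP; exists (~: (C :\ e)).
have eS' : e \in ~: (C :\ e) by rewrite !inE eqxx.
rewrite (_ : ~: (C :\ e) != set0) /=; last by apply/set0Pn; exists e.
rewrite (_ : oneint C (~: (C :\ e))) /=; last first.
  apply/cards1P; exists e; apply/setP => y; rewrite !inE.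
  case: (eqVneq y e) => [-> | ye] /=; first by rewrite eC.
  by case: (y \in C).
apply/forall_inP => D Dc; apply/implyP => /cards1P [f hf].
have : f \in D :&: ~: (C :\ e) by rewrite hf set11.
rewrite !inE negb_and negbK => /andP [fD fCe].
have DS : forall y, y \in D -> y != f -> (y != e) && (y \in C).
  move=> y yD yf; apply/negPn/negP => hy.
  have : y \in D :&: ~: (C :\ e) by rewrite !inE yD hy.
  by rewrite hf inE (negbTE yf).
have Cmin := Cc; rewrite circP in Cmin.
have Dmin := Dc; rewrite circP in Dmin.
case: (eqVneq f e) => [fe | fne].
- apply/eqP; move/minsetP: Cmin => [_ minC']; apply: minC'.
  + by move/minsetP: Dmin => [].
  + apply/subsetP => y yD; case: (eqVneq y f) => [-> | yf]; first by rewrite fe.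
    by case/andP: (DS y yD yf).
- exfalso.
  have eD : e \notin D.
    apply/negP => eD; have ef : e != f by rewrite eq_sym.
    by move: (DS e eD ef); rewrite eqxx.
  set Z := (C :\: D) :|: (D :\: C).
  have sZ : (\sum_(x in Z) v x = 0)%R.
    rewrite /Z (symdiff_sum v h01) (circ_sum h01 Cmin) (circ_sum h01 Dmin).
    by rewrite GRing.addr0.
  have eZ : e \in Z by rewrite !inE eC eD.
  have [C' [C'm eC' C'Z]] := cycle_circ h01 sZ eZ.
  have C'c : C' \in circ by rewrite circP.
  have sD := simp D Dc.
  have sC' := simp C' C'c.
  case: (boolP (f \in S)) => fS.
  + have oD : oneint D S.
      apply/cards1P; exists f; apply/setP => y; rewrite !inE.
      case: (eqVneq y f) => [-> | yf]; first by rewrite fD fS.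
      apply/negP => /andP [yD yS]; move: (DS y yD yf) => /andP [ye yC].
      by move: ye; rewrite (CS y yC yS) eqxx.
    have := minC D; rewrite /P Dc oD => /(_ isT) hCD.
    case: (boolP (C :\ e \subset D :\ f)) => hsub.
    * have : C' \subset [set e; f].
        apply/subsetP => y /(subsetP C'Z); rewrite !inE.
        case/orP => /andP [yD yC].
        - apply/orP; left; apply/negPn/negP => ye.
          have : y \in C :\ e by rewrite !inE ye yC.
          move/(subsetP hsub); rewrite !inE => /andP [_ yD']; by rewrite yD' in yD.
        - apply/orP; right; apply/negPn/negP => yf.
          by move: (DS y yC yf) => /andP [_ yC']; rewrite yC' in yD.
      move/subset_leq_card; rewrite cards2 => h.
      have : #|C'| <= 2 by apply: leq_trans h _; case: (e != f).
      by rewrite leqNgt sC'.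
    * have pr : D :\ f \proper C :\ e.
        rewrite properE hsub andbT; apply/subsetP => y; rewrite !inE => /andP [yf yD].
        exact: DS.
      have := proper_card pr.
      rewrite (cardsD1 f D) (cardsD1 e C) fD eC in hCD.
      move=> h; rewrite -(ltn_add2l true) in h; have := leq_ltn_trans hCD h; by rewrite ltnn.
  + have oC' : oneint C' S.
      apply/cards1P; exists e; apply/setP => y; rewrite !inE.
      case: (eqVneq y e) => [-> | ye]; first by rewrite eC' eS.
      apply/negP => /andP [yC' yS]; move: (subsetP C'Z y yC'); rewrite !inE.
      case/orP => /andP [yD yC].
      * by move: ye; rewrite (CS y yC yS) eqxx.
      * have yf : y != f by apply/eqP => yf; move: fS; rewrite -yf yS.
        by move: (DS y yC yf) => /andP [_ yCC]; rewrite yCC in yD.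
    have := minC C'; rewrite /P C'c oC' => /(_ isT) hCC'.
    have h1 : #|C'| <= #|Z| by apply: subset_leq_card.
    have h2 : #|Z| <= #|C :\: D| + #|D :\: C| by rewrite cardsU leq_subr.
    have h3 : #|D :\: C| <= 1.
      rewrite -(cards1 f); apply: subset_leq_card; apply/subsetP => y; rewrite !inE.
      move=> /andP [yC yD]; apply/negPn/negP => yf.
      by move: (DS y yD yf) => /andP [_ yC']; rewrite yC' in yC.
    have h4 := cardsID D C.
    have h5 : #|D :\ f| <= #|C :&: D|.
      apply: subset_leq_card; apply/subsetP => y; rewrite !inE => /andP [yf yD].
      by move: (DS y yD yf) => /andP [_ ->]; rewrite yD.
    have h6 := cardsD1 f D; rewrite fD in h6.
    have h7 : #|C| <= #|C :\: D| + 1.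
      exact: leq_trans hCC' (leq_trans h1 (leq_trans h2 (leq_add (leqnn _) h3))).
    have h8 : 2 <= #|C :&: D|.
      by apply: leq_trans h5; move: sD; rewrite h6 /= add1n ltnS.
    have h9 := leq_trans (leq_add h8 (leqnn #|C :\: D|)) (eq_leq h4).
    have := leq_trans h9 h7; by rewrite addnC leq_add2l.
Qed.

Lemma free_le_dim (K : fieldType) d n (v : 'I_n -> 'rV[K]_d) (S : {set 'I_n}) :
  free [seq v i | i in S] -> #|S| <= d.
Proof.
rewrite /free size_image => /eqP <-.
have := dimvS (subvf <<[seq v i | i in S]>>%VS); by rewrite dimvf dim_matrix GRing.mul1r.
Qed.


Local Open Scope ring_scope.

Definition tval (K : fieldType) (a : K) (k : nat) : K :=
  match k with 0%N => 0 | 1%N => 1 | _ => a end.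

Definition vrow (K : fieldType) (a : K) (i : 'I_4) : 'rV[K]_2 :=
  \row_(j < 2) (if val i == 3%N then (if val j == 0%N then 0 else 1)
                else (if val j == 0%N then 1 else tval a (val i))).

Lemma indep2 (K : fieldType) (u w : 'rV[K]_2) (c1 c2 : K) :
  u 0 0 * w 0 1 - u 0 1 * w 0 0 != 0 -> c1 *: u + c2 *: w = 0 -> c1 = 0.
Proof.
move=> hd h.
have e0 : c1 * u 0 0 + c2 * w 0 0 = 0.
  by have := congr1 (fun M : 'rV[K]_2 => M 0 0) h; rewrite /= !mxE.
have e1 : c1 * u 0 1 + c2 * w 0 1 = 0.
  by have := congr1 (fun M : 'rV[K]_2 => M 0 1) h; rewrite /= !mxE.
have : c1 * (u 0 0 * w 0 1 - u 0 1 * w 0 0) = 0.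
  have -> : c1 * (u 0 0 * w 0 1 - u 0 1 * w 0 0) =
     w 0 1 * (c1 * u 0 0 + c2 * w 0 0) - w 0 0 * (c1 * u 0 1 + c2 * w 0 1) by ring.
  by rewrite e0 e1 !mulr0 subr0.
by move/eqP; rewrite mulf_eq0 (negbTE hd) orbF => /eqP.
Qed.

Lemma vrow_det (K : fieldType) (a : K) (x y : 'I_4) : a != 0 -> a != 1 -> x != y ->
  vrow a x 0 0 * vrow a y 0 1 - vrow a x 0 1 * vrow a y 0 0 != 0.
Proof.
move=> a0 a1 xy; rewrite /vrow !mxE /=.
case: x xy => [[|[|[|[|m]]]] hx] //; case: y => [[|[|[|[|m']]]] hy] // _ /=;
  rewrite ?mul0r ?mulr0 ?mul1r ?mulr1 ?subr0 ?sub0r ?oppr_eq0 ?oner_eq0 ?subr_eq0 //;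
  rewrite ?(eq_sym a) ?a0 ?a1 ?oner_eq0 //.
all: try by rewrite eq_sym oner_eq0.
all: try by rewrite eq_sym.
Qed.

Lemma vrow_dep (K : fieldType) (a : K) : a != 0 -> a != 1 ->
  forall S : {set 'I_4}, vdependent (vrow a) S = (2 < #|S|)%N.
Proof.
move=> a0 a1 S; apply/idP/idP.
- move=> dep; rewrite ltnNge; apply/negP => le2; move/negP: dep; apply.
  apply/(freeS (vrow a) S) => c hc x xS.
  have hD := cardsD1 x S; rewrite xS in hD.
  have eS := setD1K xS.
  have : (#|S :\ x| <= 1)%N by move: le2; rewrite hD.
  case: (posnP #|S :\ x|) => [/eqP h0 _ | hpos h1].
  + move: h0; rewrite cards_eq0 => /eqP h0.
    rewrite -eS h0 setU0 big_set1 in hc.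
    pose y : 'I_4 := if x == ord0 then inord 1 else ord0.
    have xy : x != y.
      rewrite /y; case: (eqVneq x ord0) => [-> | //].
      by apply/eqP => /(congr1 val); rewrite /= inordK.
    apply: (indep2 (w := vrow a y) (c2 := 0) (vrow_det a0 a1 xy)).
    by rewrite scale0r addr0.
  + have : (#|S :\ x| == 1)%N by rewrite eqn_leq h1 hpos.
    move/cards1P => [y hy].
    have xy : x != y.
      apply/eqP => exy; have : y \in S :\ x by rewrite hy set11.
      by rewrite -exy !inE eqxx.
    rewrite -eS hy big_setU1 ?big_set1 /= in hc; last by rewrite inE.
    exact: (indep2 (vrow_det a0 a1 xy) hc).
- move=> h; apply/negP => /free_le_dim; by rewrite leqNgt h.
Qed.

Definition circ4 : {set {set 'I_4}} := [set S : {set 'I_4} | #|S| == 3%N].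

Lemma vrow_circ (K : fieldType) (a : K) : a != 0 -> a != 1 ->
  circ4 = [set S | minset (vdependent (vrow a)) S].
Proof.
move=> a0 a1; apply/setP => S; rewrite !inE; apply/idP/idP.
- move/eqP => h3; apply/minsetP; split; first by rewrite vrow_dep // h3.
  move=> W; rewrite vrow_dep // => hW sub; apply/eqP; rewrite eqEcard sub h3 /=.
  exact: hW.
- move/minsetP => [dep minS]; rewrite vrow_dep // in dep.
  apply/eqP; apply/anti_leq; rewrite dep andbT.
  rewrite leqNgt; apply/negP => g3.
  have [x xS] : exists x, x \in S.
    by apply/set0Pn; rewrite -cards_eq0 -lt0n (leq_trans _ dep).
  have hD := cardsD1 x S; rewrite xS in hD.
  have : S :\ x = S.
    apply: minS; last exact: subsetDl.
    by rewrite vrow_dep // -(ltn_add2l 1) -hD.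
  by move/setP => /(_ x); rewrite xS !inE eqxx.
Qed.

Local Close Scope ring_scope.

Lemma circ4_matroid : is_matroid_circuits circ4.
Proof.
split.
- by rewrite inE cards0.
- move=> C1 C2; rewrite !inE => /eqP h1 /eqP h2 sub; apply/eqP.
  by rewrite eqEcard sub h1 h2.
- move=> C1 C2 e; rewrite !inE => /eqP h1 /eqP h2 ne eI.
  exists ((C1 :|: C2) :\ e); last exact: subxx.
  rewrite inE.
  have hU := cardsUI C1 C2; rewrite h1 h2 in hU.
  have hI : (#|C1 :&: C2| < 3)%N.
    have hle : (#|C1 :&: C2| <= 3)%N by apply: (leq_trans (subset_leq_card (subsetIl C1 C2))); rewrite h1.
    rewrite ltn_neqAle hle andbT.
    apply/negP => /eqP hc; apply: ne; apply/eqP; rewrite eqEcard h1 h2 leqnn andbT.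
    have : C1 :&: C2 == C1 by rewrite eqEcard subsetIl hc h1.
    move/eqP => <-; exact: subsetIr.
  have hmax : (#|C1 :|: C2| <= 4)%N by apply: (leq_trans (max_card _)); rewrite card_ord.
  have eU : e \in C1 :|: C2 by move: eI; rewrite !inE => /andP [->].
  have hD := cardsD1 e (C1 :|: C2); rewrite eU in hD.
  apply/eqP; move: hU hI hmax; rewrite hD; lia.
Qed.

Lemma circ4_simple : simple_matroid circ4.
Proof. by move=> C; rewrite inE => /eqP ->. Qed.

Lemma circ4_card : forall C, C \in circ4 -> (1 < #|C|)%N.
Proof. by move=> C; rewrite inE => /eqP ->. Qed.

Lemma circ4_comp C : C \in circ4 -> exists j, C = [set~ j].
Proof.
rewrite inE => /eqP h.
have : #|~: C| == 1%N.
  have := cardsCs C; rewrite card_ord h => e.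
  have := cardsC C; rewrite card_ord h; lia.
move/cards1P => [j hj]; exists j; by rewrite -[C]setCK hj.
Qed.

Lemma setC1_in j : [set~ j] \in circ4.
Proof. by rewrite inE cardsC1 card_ord. Qed.

Lemma setC1_inj (a b : 'I_4) : [set~ a] = [set~ b] -> a = b.
Proof.
move=> e; apply/eqP; apply/negPn/negP => ab.
have : b \in [set~ a] by rewrite !inE eq_sym.
by rewrite e !inE eqxx.
Qed.

Definition Bk (k : 'I_4) := circ4 :\ [set~ k].

Lemma Bk_min k : minimal_tropical_basis circ4 (Bk k).
Proof.
have sub : Bk k \subset circ4 by exact: subsetDl.
split.
- apply/(tb_iff _ circ4_card); split => // S Sne gB.
  apply/forall_inP => C Cc; apply/negP => oC.
  case: (eqVneq C [set~ k]) => [eCk | nCk]; last first.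
    have : C \in Bk k by rewrite in_setD1 nCk Cc.
    by move/(forall_inP gB); rewrite oC.
  move: oC; rewrite eCk /oneint => /cards1P [s hs].
  have hsS : forall y, (y \in S) = (y == s) || ((y == k) && (k \in S)).
    move=> y; case: (eqVneq y k) => [-> | yk] /=.
      have : s \in [set~ k] :&: S by rewrite hs set11.
      rewrite !inE => /andP [sk _]; by rewrite eq_sym (negbTE sk).
    move/setP: (hs) => /(_ y); rewrite !inE yk /= => ->.
    by rewrite orbF.
  have sk : s != k.
    have : s \in [set~ k] :&: S by rewrite hs set11.
    by rewrite !inE => /andP [].
  case: (boolP (k \in S)) => kS.
  + have : [set~ s] \in Bk k.
      rewrite in_setD1 setC1_in andbT; apply/negP => /eqP /setC1_inj e; by rewrite e eqxx in sk.
    move/(forall_inP gB); rewrite /oneint; apply/negP; rewrite negbK; apply/cards1P.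
    exists k; apply/setP => y; rewrite !inE hsS kS andbT.
    case: (eqVneq y s) => [-> | ys] /=; first by rewrite (negbTE sk).
    by [].
  + have [m hm] : exists m : 'I_4, m \notin [set k; s].
      apply/existsP; rewrite -negb_forall; apply/negP => /forallP hall.
      have : [set k; s] = setT by apply/setP => y; rewrite in_setT; exact: hall y.
      move=> eT; have := cards2 k s; rewrite eT cardsT card_ord.
      by case: (k != s).
    move: hm; rewrite !inE negb_or => /andP [mk ms].
    have : [set~ m] \in Bk k.
      rewrite in_setD1 setC1_in andbT; apply/negP => /eqP /setC1_inj e; by rewrite e eqxx in mk.
    move/(forall_inP gB); rewrite /oneint; apply/negP; rewrite negbK; apply/cards1P.
    exists s; apply/setP => y; rewrite !inE hsS (negbTE kS) andbF orbF.
    case: (eqVneq y s) => [-> | ys] /=; [by rewrite eq_sym ms | by rewrite andbF].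
- move=> B' pr /(tb_iff _ circ4_card) [sub' h].
  have [subB [C CB CnB]] := properP pr.
  move: (CB); rewrite in_setD1 => /andP [nCk Cc].
  have [j ej] := circ4_comp Cc.
  have jk : j != k by apply/negP => /eqP e; move: nCk; rewrite ej e eqxx.
  have Sne : [set j; k] != set0 by apply/set0Pn; exists j; rewrite !inE eqxx.
  have gB' : goodb B' [set j; k].
    apply/forall_inP => D DB'; have DB := subsetP subB D DB'.
    move: (DB); rewrite in_setD1 => /andP [nDk Dc].
    have [m em] := circ4_comp Dc.
    have mk : m != k by apply/negP => /eqP e; move: nDk; rewrite em e eqxx.
    have mj : m != j by apply/negP => /eqP e; move: CnB; rewrite ej -e -em DB'.
    rewrite /oneint em.
    have -> : [set~ m] :&: [set j; k] = [set j; k].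
      apply/setP => y; rewrite !inE.
      case: (eqVneq y j) => [-> | yj] /=; first by rewrite eq_sym mj.
      case: (eqVneq y k) => [-> | yk] /=; [by rewrite eq_sym mk | by rewrite andbF].
    by rewrite cards2 jk.
  have := forall_inP (h _ Sne gB') C Cc.
  rewrite /oneint ej; apply/negP; rewrite negbK; apply/cards1P; exists k.
  apply/setP => y; rewrite !inE.
  case: (eqVneq y j) => [-> | yj] /=; first by rewrite (negbTE jk).
  by [].
Qed.

Theorem theorem5 (F : fieldType -> Prop) :
  (forall (n : nat) (circ : {set {set 'I_n}}),
      is_matroid_circuits circ -> simple_matroid circ ->
      (forall K : fieldType, F K -> representable K circ) ->
      exists! B : {set {set 'I_n}}, minimal_tropical_basis circ B)
  <-> (exists K : fieldType, F K /\ iso_F2 K).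
Proof.
split.
- move=> H1; apply: NNPP => hno.
  have rep : forall K, F K -> representable K circ4.
    move=> K FK; have niso : ~ iso_F2 K by move=> hi; apply: hno; exists K.
    have [a [a0 a1]] := not_iso_F2 niso.
    exists 2%N, (vrow a); exact: vrow_circ.
  have [B [_ uB]] := H1 4%N circ4 circ4_matroid circ4_simple rep.
  have e0 := uB _ (Bk_min ord0).
  have e1 := uB _ (Bk_min (inord 1)).
  have : [set~ ord0] \in Bk (inord 1).
    rewrite in_setD1 setC1_in andbT; apply/negP => /eqP /setC1_inj /(congr1 val).
    by rewrite /= inordK.
  by rewrite -e1 e0 in_setD1 eqxx.
- move=> [K [FK iso]] n circ _ simp rep.
  have [d [v hv]] := rep K FK.
  apply: GU.
  + move=> C Cc; exact: ltnW (simp C Cc).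
  + exact: binary_hess iso hv simp.
Qed.
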